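(* Let $n \geq 3$ and let $S$ be a $4$-cap free, $n$-cup free configuration of size at least $\binom{n-1}{2}+1$, with a fixed slope labeling. For each $1 \le i \le n-1$ let $R_i(S) = \{p\in S : \beta(p)=i\}$. Then $R_i(S)$ is nonempty for every $1 \leq i \leq n-1$.
   Context: A configuration is a finite set $S$ of points with a linear order $<$ and, for every $3$-element subset, an arbitrary assignment declaring it either a cap or a cup. Points $x_1<\cdots<x_a$ form an $a$-cup (resp. $a$-cap) if every consecutive triple $\{x_{i-1},x_i,x_{i+1}\}$, $1<i<a$, is assigned cup (resp. cap); $1$- and $2$-element sets are both caps and cups. The length of a cup is its number of points; a cup $x_1\cdots x_a$ ends with $x_a$. An edge is a pair $x<y$, written $xy$. A slope labeling of a $4$-cap free configuration is an assignment $s(xy)\in\{1,2\}$ to every edge such that for any $x<y<z$, $s(xy)\le s(yz)$ implies $\{x,y,z\}$ is a $3$-cup. For $p \in S$, $\beta(p)$ denotes the maximum length of a cup that ends with $p$. *)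

(* Defs.v *)
From mathcomp Require Import all_boot.
Set Implicit Arguments. Unset Strict Implicit. Unset Printing Implicit Defensive.

(* A configuration of size N: points 'I_N with their natural linear order.
   cupf x y z (meaningful for x < y < z) tells whether the triple {x,y,z}
   is a cup; otherwise it is a cap. *)
Section Config.
Variable N : nat.
Variable cupf : 'I_N -> 'I_N -> 'I_N -> bool.

Fixpoint consec3 (P : 'I_N -> 'I_N -> 'I_N -> bool) (s : seq 'I_N) : bool :=
  match s with
  | x :: ((y :: z :: _) as t) => P x y z && consec3 P t
  | _ => true
  end.

Definition incr (s : seq 'I_N) : bool := sorted (fun x y : 'I_N => x < y) s.

Definition is_cup (s : seq 'I_N) : bool := incr s && consec3 cupf s.
Definition is_cap (s : seq 'I_N) : bool :=
  incr s && consec3 (fun x y z => ~~ cupf x y z) s.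

Definition cap4_free : Prop := forall s, is_cap s -> size s < 4.
Definition cup_free (n : nat) : Prop := forall s, is_cup s -> size s < n.

Definition slope_labeling (sl : 'I_N -> 'I_N -> nat) : Prop :=
  (forall x y : 'I_N, x < y -> (sl x y == 1) || (sl x y == 2)) /\
  (forall x y z : 'I_N, x < y -> y < z -> sl x y <= sl y z -> cupf x y z).

(* beta p = maximum length of a cup ending with p; a cup is identified with
   its point set, listed in increasing order by enum. *)
Definition beta (p : 'I_N) : nat :=
  \max_(A : {set 'I_N} | is_cup (enum A) && (p \in A) && [forall x in A, x <= p])
     #|A|.

Definition Rset (i : nat) : {set 'I_N} := [set p | beta p == i].
End Config.

(* Main.v *)
Require Import Defs.
From mathcomp Require Import all_boot.
From mathcomp Require Import zify.

Section Helpers.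
Variable N : nat.
Variable cupf : 'I_N -> 'I_N -> 'I_N -> bool.
Variable sl : 'I_N -> 'I_N -> nat.
Hypothesis Hsl : slope_labeling cupf sl.

Lemma sorted_enumA (A : {set 'I_N}) : incr (enum A).
Proof.
rewrite /incr /enum_mem.
have H : sorted (fun x y : 'I_N => x < y) (Finite.enum 'I_N).
  rewrite -enumT.
  have := iota_ltn_sorted 0 N. rewrite -val_enum_ord.
  by rewrite sorted_map.
apply: sorted_filter => //.
move=> x y z; exact: ltn_trans.
Qed.

Lemma consec3_cat3 (P : 'I_N -> 'I_N -> 'I_N -> bool) s x y z :
  consec3 P (s ++ [:: x; y; z]) = consec3 P (s ++ [:: x; y]) && P x y z.
Proof.
elim: s => [|a s IH] /=; first by rewrite andbT.
case: s IH => [|b s] IH /=; first by rewrite !andbT.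
case: s IH => [|c s] IH /=; first by rewrite /= in IH; rewrite IH !andbA.
by rewrite /= in IH; rewrite IH !andbA.
Qed.

Lemma consec3_rconsK (P : 'I_N -> 'I_N -> 'I_N -> bool) s z :
  consec3 P (rcons s z) -> consec3 P s.
Proof.
elim: s => [|a s IH] //.
case: s IH => [|b s] IH //.
case: s IH => [|c s] IH //=.
by move=> /andP [-> /IH].
Qed.

Lemma consec3_all (P : 'I_N -> 'I_N -> 'I_N -> bool) s :
  (forall x y z : 'I_N, x \in s -> y \in s -> z \in s -> x < y -> y < z -> P x y z) ->
  incr s -> consec3 P s.
Proof.
elim: s => [|a s IH] //.
case: s IH => [|b s] IH //.
case: s IH => [|c s] IH // H.
rewrite /incr /= => /and3P [ab bc Hs].
rewrite H ?inE ?eqxx ?orbT //=.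
apply: IH.
  by move=> x y z Hx Hy Hz; apply: H; rewrite inE ?Hx ?Hy ?Hz orbT.
by rewrite /incr /= bc.
Qed.

Lemma mem_last' (A : {set 'I_N}) : forall a s, enum A = a :: s -> last a s \in A.
Proof. by move=> a s E; rewrite -mem_enum E mem_last. Qed.

Lemma enum_rcons (B : {set 'I_N}) p :
  p \in B -> (forall x, x \in B -> x <= p) -> enum B = rcons (enum (B :\ p)) p.
Proof.
move=> pB Hle.
apply: (@irr_sorted_eq _ (fun x y : 'I_N => x < y)).
- move=> x y z; exact: ltn_trans.
- move=> x; exact: ltnn.
- exact: sorted_enumA.
- have := sorted_enumA (B :\ p); have := mem_last' (B :\ p).
  case: (enum (B :\ p)) => [|a s] //= Hl Hs.
  rewrite rcons_path Hs /=.
  move: (Hl a s erefl); rewrite !inE => /andP [xp xB].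
  by rewrite ltn_neqAle Hle // andbT; apply: contra xp => /eqP/val_inj ->.
- move=> x; rewrite mem_rcons mem_enum in_cons mem_enum !inE.
  by case: (x =P p) => [->|].
Qed.

Arguments enum_rcons {B p}.

Definition cond (p : 'I_N) (A : {set 'I_N}) :=
  is_cup cupf (enum A) && (p \in A) && [forall x in A, x <= p].

Lemma beta_ge p A : cond p A -> #|A| <= beta cupf p.
Proof. move=> H; exact: (@leq_bigmax_cond _ (cond p) (fun A => #|A|) A H). Qed.

Arguments beta_ge {p A}.

Lemma cond1 p : cond p [set p].
Proof.
rewrite /cond /is_cup /incr enum_set1 set11 /=.
by apply/forallP => x; apply/implyP; rewrite inE => /eqP ->.
Qed.

Lemma beta_wit p : exists2 A, cond p A & #|A| = beta cupf p.
Proof.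
have H : 0 < #|cond p|.
  by apply/card_gt0P; exists [set p]; exact: cond1.
case: (@eq_bigmax_cond _ (cond p) (fun A => #|A|) H) => A HA E.
by exists A => //; rewrite /beta -E.
Qed.

Lemma beta_pos p : 1 <= beta cupf p.
Proof. by have := beta_ge (cond1 p); rewrite cards1. Qed.

Lemma beta_down : forall m (p : 'I_N), p < m -> forall k, 1 <= k <= beta cupf p ->
  exists q, beta cupf q = k.
Proof.
elim=> [|m IH] p // pm k /andP [k1 kb].
case: (k =P beta cupf p) => [->|kne]; first by exists p.
have kb' : k < beta cupf p by rewrite ltn_neqAle kb andbT; apply/eqP.
case: (beta_wit p) => A HA EA.
move: HA; rewrite /cond => /andP [/andP [cupA pA] /forallP leA].
set A' := A :\ p.
have cA' : #|A'| = (beta cupf p).-1.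
  by rewrite -EA (cardsD1 p A) pA.
have A'ne : 0 < #|A'| by rewrite cA'; lia.
case/card_gt0P: A'ne => x0 x0A.
pose q := [arg max_(i > x0 | i \in A') (i : nat)].
have [qA qmax] : q \in A' /\ forall j, j \in A' -> j <= q.
  rewrite /q; case: arg_maxnP => //= i Hi Hmax; split => //.
move: (qA); rewrite !inE => /andP [qp qA0].
have qltp : q < p.
  rewrite ltn_neqAle (implyP (leA q) qA0) andbT.
  by apply: contra qp => /eqP/val_inj ->.
have condq : cond q A'.
  rewrite /cond qA.
  have -> : [forall x in A', x <= q] by apply/forallP => x; apply/implyP; exact: qmax.
  rewrite andbT /is_cup sorted_enumA /=.
  have leA' : forall x, x \in A -> x <= p by move=> x; exact: (implyP (leA x)).
  by move: cupA; rewrite /is_cup (enum_rcons pA leA') => /andP [_ /consec3_rconsK ->].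
have := beta_ge condq; rewrite cA' => bq.
apply: (IH q) => //.
  by apply: leq_trans qltp _; rewrite -ltnS.
rewrite k1 /=; apply: leq_trans bq.
by rewrite -ltnS prednK // (leq_trans _ kb').
Qed.

Lemma beta_ext (p q : 'I_N) : p < q -> sl p q = 2 -> beta cupf p < beta cupf q.
Proof.
move=> pq s2.
case: (beta_wit p) => A HA EA.
move: HA; rewrite /cond => /andP [/andP [cupA pA] /forallP leA].
have leA' : forall x, x \in A -> x <= p by move=> x; exact: (implyP (leA x)).
have qA : q \notin A by apply/negP => /leA'; rewrite leqNgt pq.
set B := q |: A.
have qB : q \in B by rewrite !inE eqxx.
have leB : forall x, x \in B -> x <= q.
  by move=> x; rewrite !inE => /orP [/eqP ->//|/leA' xp]; lia.
have eB : enum B = rcons (enum A) q.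
  have BA : B :\ q = A.
    by apply/setP => x; rewrite !inE; case: eqP => [->|] //=; rewrite (negbTE qA).
  by rewrite (enum_rcons qB leB) BA.
have condB : cond q B.
  rewrite /cond qB andbT.
  have -> : [forall x in B, x <= q] by apply/forallP => x; apply/implyP; exact: leB.
  rewrite andbT /is_cup sorted_enumA /= eB (enum_rcons pA leA').
  move: cupA; rewrite /is_cup (enum_rcons pA leA') => /andP [_].
  case/lastP: (enum (A :\ p)) (mem_enum (A :\ p)) => [|S x] memS //.
  have xA : x \in A :\ p by rewrite -memS mem_rcons mem_head.
  move: (xA); rewrite !inE => /andP [xp xA0].
  have xltp : x < p.
    rewrite ltn_neqAle leA' // andbT.
    by apply: contra xp => /eqP/val_inj ->.
  rewrite -!cats1 -!catA /= consec3_cat3 => ->.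
  case: Hsl => H1 H2; apply: H2 => //.
  by rewrite s2; case/orP: (H1 _ _ xltp) => /eqP ->.
have := beta_ge condB.
by rewrite cardsU1 qA -EA.
Qed.

Lemma Rset_small b : #|Rset cupf b| <= b.
Proof.
case: (boolP (0 < #|Rset cupf b|)) => [ne|]; last by rewrite -eqn0Ngt => /eqP ->.
case/card_gt0P: ne => x0 x0R.
pose p := [arg max_(i > x0 | i \in Rset cupf b) (i : nat)].
have [pR pmax] : p \in Rset cupf b /\ forall j, j \in Rset cupf b -> j <= p.
  rewrite /p; case: arg_maxnP => //= i Hi Hmax; split => //.
have sl1 : forall x y, x \in Rset cupf b -> y \in Rset cupf b -> x < y -> sl x y = 1.
  move=> x y; rewrite !inE => /eqP bx /eqP bY xy.
  case: Hsl => H1 _.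
  case/orP: (H1 _ _ xy) => /eqP // s2.
  by have := @beta_ext x y xy s2; rewrite bx bY ltnn.
have condR : cond p (Rset cupf b).
  rewrite /cond pR andbT.
  have -> : [forall x in Rset cupf b, x <= p] by apply/forallP => x; apply/implyP; exact: pmax.
  rewrite andbT /is_cup sorted_enumA /=.
  apply: consec3_all; last exact: sorted_enumA.
  move=> x y z; rewrite !mem_enum => xR yR zR xy yz.
  case: Hsl => _ H2; apply: H2 => //.
  by rewrite (sl1 x y) ?(sl1 y z).
have := beta_ge condR.
by move: pR; rewrite inE => /eqP ->.
Qed.

Lemma count_bound m : (forall p, beta cupf p < m) -> N <= 'C(m, 2).
Proof.
move=> Hm.
have -> : N = \sum_(p : 'I_N) 1 by rewrite sum1_card card_ord.
rewrite (partition_big (fun p => Ordinal (Hm p)) xpredT) //=.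
rewrite -bin2_sum big_mkord.
apply: leq_sum => b _.
apply: leq_trans (Rset_small b).
rewrite -sum1_card; apply: eq_leq; apply: eq_bigl => x.
by rewrite inE.
Qed.

End Helpers.

Theorem lemma5p9 (n N : nat) (cupf : 'I_N -> 'I_N -> 'I_N -> bool)
  (sl : 'I_N -> 'I_N -> nat) :
  3 <= n ->
  cap4_free cupf ->
  cup_free cupf n ->
  'C(n.-1, 2) + 1 <= N ->
  slope_labeling cupf sl ->
  forall i, 1 <= i <= n.-1 -> Rset cupf i != set0.
Proof.
move=> _ _ _ HN Hsl i /andP [i1 in1].
apply/negP => /eqP R0.
have Hlt : forall p, beta cupf p < i.
  move=> p; rewrite ltnNge; apply/negP => ip.
  have := @beta_down N cupf _ p (ltn_ord p) i; rewrite i1 ip => /(_ isT) [q bq].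
  have : q \in Rset cupf i by rewrite inE bq.
  by rewrite R0 inE.
have Hlt' : forall p, beta cupf p < n.-1 by move=> p; exact: leq_trans (Hlt p) in1.
have := @count_bound N cupf sl Hsl _ Hlt'.
lia.
Qed.
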